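(* Let $M$ be a matroid of rank $r$ on a finite ground set $E$ with set of bases $\mathcal{B}(M)$, and let $(E_1,E_2)$ be a good partition of $E$ with associated integers $r_1,r_2,a_1,a_2$ (as defined in the context). Define $$\mathcal{B}_1=\{B\in\mathcal{B}(M): |B\cap E_1|\le r_1-a_1\},\qquad \mathcal{B}_2=\{B\in\mathcal{B}(M): |B\cap E_2|\le r_2-a_2\}.$$ Then $\mathcal{B}_1$ and $\mathcal{B}_2$ are each the collection of bases of a matroid on $E$.
   Context: For $A\subseteq E$, $M|_A$ denotes the restriction of $M$ to $A$, whose independent sets are the independent sets of $M$ contained in $A$; $\mathcal{I}(N)$ denotes the family of independent sets of a matroid $N$. A partition $(E_1,E_2)$ of $E$ (so $E=E_1\cup E_2$, $E_1\cap E_2=\emptyset$) with $r_i$ the rank of $M|_{E_i}$ and $r_i>1$ for $i=1,2$ is called a good partition if there exist integers $a_1,a_2$ with $0<a_1<r_1$ and $0<a_2<r_2$ such that (P1) $r_1+r_2=r+a_1+a_2$, and (P2) for every $X\in\mathcal{I}(M|_{E_1})$ with $|X|\le r_1-a_1$ and every $Y\in\mathcal{I}(M|_{E_2})$ with $|Y|\le r_2-a_2$, one has $X\cup Y\in\mathcal{I}(M)$. *)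

(* Defs.v *)
(* A matroid on the finite ground set E is represented with
   E = the finite type T (the whole type), via its family of independent sets. *)
From mathcomp Require Import all_boot.
Set Implicit Arguments. Unset Strict Implicit. Unset Printing Implicit Defensive.

Section Matroid.
Variable T : finType.

Definition is_matroid (I : {set {set T}}) : Prop :=
  [/\ set0 \in I,
      (forall A B : {set T}, B \in I -> A \subset B -> A \in I) &
      (forall A B : {set T}, A \in I -> B \in I -> #|A| < #|B| ->
         exists2 x, x \in B :\: A & x |: A \in I)].

Definition bases (I : {set {set T}}) : {set {set T}} :=
  [set B in I | [forall C in I, (B \subset C) ==> (C == B)]].

Definition restrict (I : {set {set T}}) (A : {set T}) : {set {set T}} :=
  [set X in I | X \subset A].

Definition rk (I : {set {set T}}) (A : {set T}) : nat :=
  \max_(X in restrict I A) #|X|.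

Definition mrank (I : {set {set T}}) : nat := rk I [set: T].

Definition good_partition (I : {set {set T}}) (E1 E2 : {set T}) (a1 a2 : nat)
  : Prop :=
  [/\ E1 :|: E2 = [set: T], E1 :&: E2 = set0,
      [/\ 1 < rk I E1, 1 < rk I E2, 0 < a1 < rk I E1 & 0 < a2 < rk I E2],
      rk I E1 + rk I E2 = mrank I + a1 + a2 &
      (forall X Y : {set T}, X \in restrict I E1 -> #|X| <= rk I E1 - a1 ->
          Y \in restrict I E2 -> #|Y| <= rk I E2 - a2 -> X :|: Y \in I)].

Definition is_bases_of_matroid (Bs : {set {set T}}) : Prop :=
  exists I : {set {set T}}, is_matroid I /\ bases I = Bs.

End Matroid.

(* Main.v *)
Require Import Defs.
From mathcomp Require Import all_boot.
Set Implicit Arguments. Unset Strict Implicit. Unset Printing Implicit Defensive.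

Lemma sub_of_size (T : finType) (n : nat) (A : {set T}) :
  n <= #|A| -> exists2 B : {set T}, B \subset A & #|B| = n.
Proof.
move: {2}#|A| (erefl #|A|) => m; elim: m A => [|m IH] A hA hn.
  by exists A => //; apply/eqP; rewrite eqn_leq hn hA.
case: (ltnP n #|A|) => h; last first.
  by exists A => //; apply/eqP; rewrite eqn_leq h hn.
have: 0 < #|A| by rewrite hA.
case/card_gt0P => x xA.
have hA' : #|A :\ x| = m by move: hA; rewrite (cardsD1 x A) xA add1n => -[].
have hn' : n <= #|A :\ x| by rewrite hA' -ltnS -hA.
have [B sB cB] := IH (A :\ x) hA' hn'.
by exists B => //; apply: (subset_trans sB); apply: subsetDl.
Qed.

Lemma indep_le_rank (T : finType) (I : {set {set T}}) (X : {set T}) :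
  X \in I -> #|X| <= mrank I.
Proof.
move=> XI; rewrite /mrank /rk.
have P : X \in restrict I [set: T] by rewrite inE XI subsetT.
by rewrite (bigD1 X) //= leq_maxl.
Qed.

Lemma rank_witness (T : finType) (I : {set {set T}}) (E : {set T}) :
  set0 \in I -> exists2 X : {set T}, X \in restrict I E & #|X| = rk I E.
Proof.
move=> h0.
have P0 : (set0 : {set T}) \in restrict I E by rewrite inE h0 sub0set.
rewrite /rk (bigmax_eq_arg _ P0).
case: arg_maxnP => // X HX _; by exists X.
Qed.

Lemma sub_size_indep (T : finType) (I : {set {set T}}) (E : {set T}) n :
  is_matroid I -> n <= rk I E ->
  exists2 X : {set T}, X \in restrict I E & #|X| = n.
Proof.
case=> h0 hsub _ hn.
have [X HX cX] := rank_witness E h0.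
have hnX : n <= #|X| by rewrite cX.
have [Y sY cY] := sub_of_size hnX.
exists Y => //; move: HX; rewrite !inE => /andP[XI XE].
by rewrite (hsub _ _ XI sY) (subset_trans sY XE).
Qed.

Section Main.
Variables (T : finType) (I : {set {set T}}) (E1 E2 : {set T}) (a1 a2 : nat).
Hypothesis HM : is_matroid I.
Hypothesis HG : good_partition I E1 E2 a1 a2.

Let k := rk I E1 - a1.
Let l := rk I E2 - a2.
Definition I' := [set X in I | #|X :&: E1| <= k].

Lemma kl : k + l = mrank I.
Proof.
case: HG => _ _ [_ _ /andP[_ h1] /andP[_ h2]] hs _.
rewrite /k /l; apply/eqP; rewrite -(eqn_add2r (a1 + a2)) !addnA -hs -addnA.
rewrite addnACA !subnK //; exact: ltnW.
Qed.

Lemma E2_notE1 x : x \in E2 -> x \notin E1.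
Proof.
case: HG => _ hI _ _ _ xE2; apply/negP => xE1.
have : x \in E1 :&: E2 by rewrite inE xE1.
by rewrite hI inE.
Qed.

Lemma split_card (X : {set T}) : #|X| = #|X :&: E1| + #|X :&: E2|.
Proof.
case: HG => hU _ _ _ _.
rewrite -cardsUI -setIUr hU setIT.
suff -> : X :&: E1 :&: (X :&: E2) = set0 by rewrite cards0 addn0.
apply/setP => y; rewrite !inE; case yE2: (y \in E2); last by rewrite !andbF.
by rewrite (negbTE (E2_notE1 yE2)) /= andbF.
Qed.

Lemma I'_matroid : is_matroid I'.
Proof.
case: HM => h0 hsub haug; case: HG => hU hI _ _ hP.
split.
- by rewrite inE h0 set0I cards0.
- move=> A B; rewrite !inE => /andP[BI Bk] AB; rewrite (hsub _ _ BI AB) /=.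
  apply: leq_trans Bk; apply: subset_leq_card; exact: setSI.
move=> A B; rewrite !inE => /andP[AI Ak] /andP[BI Bk] AB.
case: (ltnP #|A :&: E1| k) => hk.
  have [x xBA xA] := haug _ _ AI BI AB.
  exists x => //; rewrite inE xA /=.
  apply: (@leq_trans (#|A :&: E1|.+1)) => //.
  rewrite setIUl; apply: leq_trans (leq_card_setU _ _) _.
  rewrite -add1n leq_add2r; apply: leq_trans (subset_leq_card (subsetIl _ _)) _; by rewrite cards1.
have A1k : #|A :&: E1| = k by apply/eqP; rewrite eqn_leq Ak hk.
have Br : #|B| <= mrank I := indep_le_rank BI.
have A2l : #|A :&: E2| < l.
  rewrite -(ltn_add2l k) kl -A1k -split_card; exact: leq_trans AB Br.
have B2A2 : #|A :&: E2| < #|B :&: E2|.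
  rewrite -(ltn_add2l #|A :&: E1|) -split_card A1k.
  apply: leq_trans AB _; rewrite split_card leq_add2r; exact: Bk.
have [Y sY cY] := sub_of_size (n := (#|A :&: E2|).+1) (A := B :&: E2) B2A2.
have YI : Y \in I by apply: hsub BI (subset_trans sY (subsetIl _ _)).
have YE2 : Y \subset E2 := subset_trans sY (subsetIr _ _).
have CI : (A :&: E1) :|: Y \in I.
  apply: hP.
  - by rewrite inE (hsub _ _ AI (subsetIl _ _)) subsetIr.
  - by rewrite A1k.
  - by rewrite inE YI YE2.
  - by rewrite cY.
have cC : #|(A :&: E1) :|: Y| = #|A :&: E1| + #|Y|.
  rewrite cardsU; suff -> : A :&: E1 :&: Y = set0 by rewrite cards0 subn0.
  apply/setP => y; rewrite !inE; case yY: (y \in Y); last by rewrite !andbF.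
  by rewrite (negbTE (E2_notE1 (subsetP YE2 y yY))) andbF.
have ACl : #|A| < #|(A :&: E1) :|: Y| by rewrite cC cY addnS ltnS -split_card.
have [x xCA xA] := haug _ _ AI CI ACl.
move: xCA; rewrite !inE => /andP[xnA /orP[/andP[xA' _]|xY]].
  by rewrite xA' in xnA.
have xB : x \in B by have := subsetP sY x xY; rewrite inE => /andP[].
have xnE1 : x \notin E1 := E2_notE1 (subsetP YE2 x xY).
exists x; first by rewrite inE xnA xB.
rewrite inE xA /= setIUl.
suff -> : [set x] :&: E1 = set0 by rewrite set0U.
by apply/setP => y; rewrite !inE; case: eqP => // ->; rewrite (negbTE xnE1).
Qed.

Lemma full_I' : exists2 Z, Z \in I' & #|Z| = mrank I.
Proof.
case: HG => hU hI [_ _ /andP[_ h1] /andP[_ h2]] _ hP.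
have [X HX cX] := sub_size_indep (n := k) (E := E1) HM (leq_subr _ _).
have [Y HY cY] := sub_size_indep (n := l) (E := E2) HM (leq_subr _ _).
have ZI : X :|: Y \in I by apply: hP => //; rewrite ?cX ?cY.
have XE1 : X \subset E1 by move: HX; rewrite inE => /andP[].
have YE2 : Y \subset E2 by move: HY; rewrite inE => /andP[].
have ZE1 : (X :|: Y) :&: E1 = X.
  apply/setP => y; rewrite !inE; case yX: (y \in X) => /=.
    by rewrite (subsetP XE1 y yX).
  case yY: (y \in Y) => //=; exact: negbTE (E2_notE1 (subsetP YE2 y yY)).
exists (X :|: Y); first by rewrite /I' inE ZI ZE1 cX leqnn.
rewrite -kl split_card ZE1 cX; congr (_ + _).
suff -> : (X :|: Y) :&: E2 = Y by [].
apply/setP => y; rewrite !inE; case yY: (y \in Y) => /=.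
  by rewrite orbT (subsetP YE2 y yY).
case yX: (y \in X) => //=.
case yE2: (y \in E2) => //.
by have := E2_notE1 yE2; rewrite (subsetP XE1 y yX).
Qed.

Lemma bases_I' : bases I' = [set B in bases I | #|B :&: E1| <= k].
Proof.
have [_ _ haug'] := I'_matroid.
have [Z ZI' cZ] := full_I'.
apply/setP => B; rewrite /bases !inE.
apply/idP/idP.
- case/andP=> /andP[BI Bk] /forall_inP Hmax.
  have BI' : B \in I' by rewrite /I' inE BI Bk.
  have cB : #|B| = mrank I.
    apply/eqP; rewrite eqn_leq indep_le_rank //=.
    rewrite leqNgt; apply/negP => lt.
    have lt' : #|B| < #|Z| by rewrite cZ.
    have [x xZB xBI'] := haug' _ _ BI' ZI' lt'.
    move: (Hmax _ xBI'); rewrite subsetUr /= => /eqP e.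
    move: xZB; rewrite inE => /andP[xnB _].
    by move: xnB; rewrite -e !inE eqxx.
  rewrite BI Bk andbT /=; apply/forall_inP => C CI; apply/implyP => BC.
  rewrite eq_sym eqEcard BC /= cB; exact: indep_le_rank.
- case/andP=> /andP[BI /forall_inP Hmax] Bk.
  rewrite BI Bk /=; apply/forall_inP => C; rewrite /I' inE => /andP[CI _].
  exact: Hmax.
Qed.

Lemma half : is_bases_of_matroid [set B in bases I | #|B :&: E1| <= rk I E1 - a1].
Proof. exists I'; split; [exact: I'_matroid | exact: bases_I']. Qed.

End Main.

Theorem lemma1 (T : finType) (I : {set {set T}}) (E1 E2 : {set T}) (a1 a2 : nat) :
  is_matroid I ->
  good_partition I E1 E2 a1 a2 ->
  is_bases_of_matroid [set B in bases I | #|B :&: E1| <= rk I E1 - a1] /\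
  is_bases_of_matroid [set B in bases I | #|B :&: E2| <= rk I E2 - a2].
Proof.
move=> HM HG; split; first exact: (half HM HG).
apply: (half (E2 := E1) (a2 := a1) HM).
case: HG => hU hI hr hs hP; split.
- by rewrite setUC.
- by rewrite setIC.
- by case: hr => ? ? ? ?; split.
- by rewrite addnC hs addnAC.
- by move=> X Y HX cX HY cY; rewrite setUC; apply: hP.
Qed.
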